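(* For any group $G$ the following conditions are equivalent: (i) $G$ is amenable; (ii) the comparison map $\iota^1: H^1(G;V)\to H^1_{(\infty)}(G;V)$ is injective for every dual normed $\mathbb{R}[G]$-module $V$; (iii) the comparison map $\iota^k: H^k(G;V)\to H^k_{(\infty)}(G;V)$ is injective for every dual normed $\mathbb{R}[G]$-module $V$ and every $k\in\mathbb{N}$.
   Context: A normed $\mathbb{R}[G]$-module is a normed real vector space $V$ on which $G$ acts on the left by linear isometries. For such $V$, $\ell^\infty(G,V)$ denotes the $\mathbb{R}[G]$-module of functions $f:G\to V$ with bounded image, with action $(g\cdot f)(h)=g\cdot (f(g^{-1}h))$. The $\ell^\infty$-cohomology of $G$ is $H^\bullet_{(\infty)}(G;V):=H^\bullet(G;\ell^\infty(G,V))$ (ordinary group cohomology with coefficients in the $\mathbb{R}[G]$-module $\ell^\infty(G,V)$). The comparison map $\iota^\bullet: H^\bullet(G;V)\to H^\bullet_{(\infty)}(G;V)$ is induced by the $G$-equivariant inclusion $\iota:V\to\ell^\infty(G,V)$ sending $v$ to the constant function with value $v$. A dual normed $\mathbb{R}[G]$-module is the topological dual $V=W'$ of a normed $\mathbb{R}[G]$-module $W$, with the operator norm and action $(g\cdot v)(w)=v(g^{-1}\cdot w)$. $G$ is amenable if there is a linear map $m:\ell^\infty(G,\mathbb{R})\to\mathbb{R}$ with $m(\text{constant } c)=c$, $m(f)\ge 0$ for $f\ge0$, and $m(g\cdot f)=m(f)$ for all $g,f$. *)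

(* Defs.v *)
From HB Require Import structures.
From mathcomp Require Import all_boot all_order all_algebra.
From mathcomp Require Import all_classical all_reals all_analysis.
Set Implicit Arguments. Unset Strict Implicit. Unset Printing Implicit Defensive.
Import Order.TTheory GRing.Theory Num.Theory.
Import numFieldNormedType.Exports.
Local Open Scope ring_scope.

(* Group cohomology H^k(G;M) via the standard inhomogeneous cochain    *)
(* complex.  The R[G]-module M is given as a subgroup [P] of an        *)
(* ambient abelian group [A] which is stable under an action [act].    *)
(* A k-cochain is a function on lists of length k of group elements    *)
(* (values on lists of other lengths are irrelevant).                  *)
Section Cohomology.
Variables (G : groupType) (A : zmodType) (act : G -> A -> A) (P : A -> Prop).

Fixpoint merge_at (i : nat) (s : seq G) : seq G :=
  match i, s with
  | 0%N, x :: y :: t => (x * y)%g :: t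
  | i'.+1, x :: t => x :: merge_at i' t
  | _, _ => s
  end.

Definition sgn (i : nat) (x : A) : A := if odd i then - x else x.

(* (df)(g1,...,g_{k+1}) = g1.f(g2,..,g_{k+1})
     + sum_{i=1}^{k} (-1)^i f(g1,..,g_i g_{i+1},..,g_{k+1})
     + (-1)^{k+1} f(g1,..,g_k)                                        *)
Definition coboundary_map (f : seq G -> A) (s : seq G) : A :=
  match s with
  | [::] => 0
  | g :: t =>
      act g (f t)
      + \sum_(i < (size s).-1) sgn i.+1 (f (merge_at i s))
      + sgn (size s) (f (take (size s).-1 s))
  end.

Definition is_cochain (k : nat) (f : seq G -> A) : Prop :=
  forall s, size s = k -> P (f s).

Definition is_cocycle (k : nat) (f : seq G -> A) : Prop :=
  is_cochain k f /\ forall s, size s = k.+1 -> coboundary_map f s = 0.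

Definition is_coboundary (k : nat) (f : seq G -> A) : Prop :=
  match k with
  | 0%N => forall s, size s = 0%N -> f s = 0
  | k'.+1 => exists b, is_cochain k' b /\
               forall s, size s = k -> f s = coboundary_map b s
  end.

End Cohomology.

(* The comparison map iota^k : H^k(G;M) -> H^k(G;N) induced by an
   equivariant map iota : A -> B (M inside A, N inside B) is injective *)
Definition comparison_injective (G : groupType) (A B : zmodType)
  (actA : G -> A -> A) (PA : A -> Prop) (actB : G -> B -> B) (PB : B -> Prop)
  (iota : A -> B) (k : nat) : Prop :=
  forall f : seq G -> A, is_cocycle actA PA k f ->
    is_coboundary actB PB k (iota \o f) -> is_coboundary actA PA k f.

(* normed R[G]-module: G acts on the normed space W by linear isometries *)
Definition isometric_linear_action (R : realType) (G : groupType)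
  (W : normedModType R) (rho : G -> W -> W) : Prop :=
  [/\ forall g (a : R) (w w' : W), rho g (a *: w + w') = a *: rho g w + rho g w',
      forall g (w : W), `|rho g w| = `|w|,
      forall w : W, rho 1%g w = w &
      forall g h (w : W), rho (g * h)%g w = rho g (rho h w)].

(* the topological dual W' : continuous linear functionals, seen inside W -> R *)
Definition in_dual (R : realType) (W : normedModType R) (v : W -> R) : Prop :=
  (forall (a : R) (w w' : W), v (a *: w + w') = a * v w + v w') /\ continuous v.

Definition dual_act (R : realType) (G : groupType) (W : normedModType R)
  (rho : G -> W -> W) (g : G) (v : W -> R) : W -> R :=
  fun w => v (rho (g^-1)%g w).

(* l^oo(G, W') inside G -> (W -> R): functions with values in W' whose
   operator norms are uniformly bounded *)
Definition in_linfty_dual (R : realType) (G : groupType) (W : normedModType R)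
  (f : G -> W -> R) : Prop :=
  (forall h, in_dual (f h)) /\
  exists C : R, forall h (w : W), `|f h w| <= C * `|w|.

Definition linfty_act (G : groupType) (V : Type) (actV : G -> V -> V)
  (g : G) (f : G -> V) : G -> V :=
  fun h => actV g (f ((g^-1) * h)%g).

(* iota : V -> l^oo(G,V), constant functions *)
Definition const_fun (G : groupType) (V : Type) (v : V) : G -> V := fun _ => v.

Definition dual_comparison_injective (R : realType) (G : groupType)
  (W : normedModType R) (rho : G -> W -> W) (k : nat) : Prop :=
  comparison_injective (dual_act rho) (@in_dual R W)
    (linfty_act (dual_act rho)) (@in_linfty_dual R G W)
    (@const_fun G (W -> R)) k.

Definition bounded_fun (R : realType) (G : Type) (f : G -> R) : Prop :=
  exists C : R, forall g, `|f g| <= C.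

Definition amenable (R : realType) (G : groupType) : Prop :=
  exists m : (G -> R) -> R,
    [/\ forall (a : R) (f f' : G -> R), bounded_fun f -> bounded_fun f' ->
          m (fun g => a * f g + f' g) = a * m f + m f',
        forall c : R, m (fun _ => c) = c,
        forall f : G -> R, bounded_fun f -> (forall g, 0 <= f g) -> 0 <= m f &
        forall (g : G) (f : G -> R), bounded_fun f ->
          m (fun h => f ((g^-1) * h)%g) = m f].

(* Main.v *)
Require Import Defs.
From HB Require Import structures.
From mathcomp Require Import all_boot all_order all_algebra.
From mathcomp Require Import all_classical all_reals all_analysis.
From mathcomp Require Import ring lra.
Require Import Defs.
Set Implicit Arguments. Unset Strict Implicit. Unset Printing Implicit Defensive.
Import Order.TTheory GRing.Theory Num.Theory.
Import numFieldNormedType.Exports.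
Local Open Scope ring_scope.


Section Top.
Variables (R : realType) (W : normedModType R) (v : W -> R).
Hypothesis hlin : forall (a : R) (w w' : W), v (a *: w + w') = a * v w + v w'.

Lemma v0 : v 0 = 0.
Proof. have := hlin 1 0 0; rewrite scale1r addr0 mul1r => H. by apply: (addrI (v 0)); rewrite addr0 -H. Qed.

Lemma vB x t : v (x - t) = v x - v t.
Proof. by rewrite -[x - t]addrC -scaleN1r hlin mulN1r addrC. Qed.

Lemma vZ a x : v (a *: x) = a * v x.
Proof. by rewrite -[a *: x]addr0 hlin v0 addr0. Qed.

Lemma lin_cont C : (forall w, `|v w| <= C * `|w|) -> continuous v.
Proof.
move=> hb x; apply/cvgrPdist_lt => e e0.
apply/nbhs_normP; exists (e / (`|C| + 1)).
  by rewrite /= divr_gt0 // ltr_pwDr // normr_ge0.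
move=> t /= xt; rewrite -vB.
apply: (le_lt_trans (hb _)).
apply: (le_lt_trans (y := (`|C| + 1) * `|x - t|)).
  apply: ler_wpM2r; first exact: normr_ge0.
  by apply: le_trans (ler_norm C) _; rewrite lerDl.
by rewrite mulrC -ltr_pdivlMr // ltr_pwDr // normr_ge0.
Qed.

Lemma cont_bound : continuous v -> exists K, forall w, `|v w| <= K * `|w|.
Proof.
move=> /(_ 0) /cvgrPdist_lt /(_ 1 ltr01) /nbhs_normP [r r0 hr].
exists (2 / r) => w.
have [->|w0] := eqVneq w 0; first by rewrite v0 !normr0 mulr0.
have nw0 : 0 < `|w| by rewrite normr_gt0.
have := hr ((r / 2 / `|w|) *: w).
rewrite /= sub0r normrN normrZ v0 sub0r normrN vZ normrM.
rewrite ger0_norm; last by rewrite !divr_ge0 // ?ltW.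
have r0' : 0 < r := r0.
move=> H.
have H1 : r/2 * `| `|w|^-1| * `|w| < r.
  rewrite ger0_norm ?invr_ge0 ?normr_ge0 // -mulrA mulVf ?gt_eqF // mulr1.
  by rewrite ltr_pdivrMr // ltr_pMr // ltr1n.
move: (H H1); rewrite normrM ger0_norm; last by rewrite !divr_ge0 // ?ltW.
have k0 : 0 < r / 2 / `|w| by rewrite !divr_gt0.
rewrite -ltr_pdivlMl // mulr1 => H2; apply: ltW; apply: (lt_le_trans H2).
have -> : (r / 2 / `|w|)^-1 = 2 / r * `|w|.
  by field; rewrite ?gt_eqF.
by [].
Qed.
End Top.


Section Bnd.
Variables (R : realType) (G : Type).
Lemma bnd_lin (a : R) (f f' : G -> R) : bounded_fun f -> bounded_fun f' ->
  bounded_fun (fun g => a * f g + f' g).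
Proof.
move=> [C hC] [C' hC']; exists (`|a| * C + C') => g.
apply: (le_trans (ler_normD _ _)); apply: lerD => //.
by rewrite normrM ler_wpM2l.
Qed.
Lemma bnd_cst (c : R) : bounded_fun (fun _ : G => c).
Proof. by exists `|c|. Qed.
Lemma bnd_D (f f' : G -> R) : bounded_fun f -> bounded_fun f' ->
  bounded_fun (fun g => f g + f' g).
Proof. by move=> hf hf'; have := bnd_lin 1 hf hf'; under eq_fun do rewrite mul1r. Qed.
Lemma bnd_N (f : G -> R) : bounded_fun f -> bounded_fun (fun g => - f g).
Proof.
move=> hf; have := bnd_lin (-1) hf (bnd_cst 0).
by under eq_fun do rewrite mulN1r addr0.
Qed.
End Bnd.

Section Mean.
Variables (R : realType) (G : groupType) (m : (G -> R) -> R).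
Hypothesis hlin : forall (a : R) (f f' : G -> R), bounded_fun f -> bounded_fun f' ->
          m (fun g => a * f g + f' g) = a * m f + m f'.
Hypothesis hc : forall c : R, m (fun _ => c) = c.
Hypothesis hpos : forall f : G -> R, bounded_fun f -> (forall g, 0 <= f g) -> 0 <= m f.
Hypothesis hinv : forall (g : G) (f : G -> R), bounded_fun f ->
          m (fun h => f ((g^-1) * h)%g) = m f.

Lemma mD f f' : bounded_fun f -> bounded_fun f' -> m (fun g => f g + f' g) = m f + m f'.
Proof. by move=> hf hf'; have := hlin 1 hf hf'; under eq_fun do rewrite mul1r; rewrite mul1r. Qed.
Lemma mN f : bounded_fun f -> m (fun g => - f g) = - m f.
Proof.
move=> hf; have := hlin (-1) hf (bnd_cst _ 0).
by under eq_fun do rewrite mulN1r addr0; rewrite hc mulN1r addr0.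
Qed.
Lemma msgn j f : bounded_fun f -> m (fun g => sgn j (f g)) = sgn j (m f).
Proof. by rewrite /sgn; case: (odd j) => // hf; rewrite mN. Qed.
Lemma mbound f B : (forall g, `|f g| <= B) -> `|m f| <= B.
Proof.
move=> hB; have hf : bounded_fun f by exists B.
have h1 := hpos (bnd_lin (-1) hf (bnd_cst _ B)).
have h2 := hpos (bnd_D hf (bnd_cst _ B)).
rewrite hlin ?hc in h1 => //; last exact: bnd_cst.
rewrite mD ?hc in h2 => //; last exact: bnd_cst.
have hg g : - B <= f g <= B by rewrite -ler_norml.
rewrite ler_norml; apply/andP; split.
  have : 0 <= m f + B by apply: h2 => g; rewrite -lerBlDr sub0r; case/andP: (hg g).
  by rewrite -lerBlDr sub0r.
have : 0 <= -1 * m f + B by apply: h1 => g; rewrite mulN1r addrC subr_ge0; case/andP: (hg g).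
by rewrite mulN1r addrC subr_ge0.
Qed.
Lemma mean_sum (I : Type) (r : seq I) (F : I -> G -> R) : (forall i, bounded_fun (F i)) ->
  bounded_fun (fun h => \sum_(i <- r) F i h) /\
  m (fun h => \sum_(i <- r) F i h) = \sum_(i <- r) m (F i).
Proof.
move=> hF; elim: r => [|i r [IH1 IH2]].
  under eq_fun do rewrite big_nil; rewrite big_nil hc; split => //; exact: bnd_cst.
under eq_fun do rewrite big_cons; rewrite big_cons; split; first exact: bnd_D.
by rewrite mD // IH2.
Qed.
End Mean.


Lemma size_merge (G : groupType) i (s : seq G) : (i < (size s).-1)%N ->
  size (merge_at i s) = (size s).-1.
Proof.
elim: s i => [|x [|y t] IH] [|i] //= hi.
by rewrite IH //=.
Qed.

Section AmenInj.
Variables (R : realType) (G : groupType) (m : (G -> R) -> R).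
Hypothesis hlin : forall (a : R) (f f' : G -> R), bounded_fun f -> bounded_fun f' ->
          m (fun g => a * f g + f' g) = a * m f + m f'.
Hypothesis hc : forall c : R, m (fun _ => c) = c.
Hypothesis hpos : forall f : G -> R, bounded_fun f -> (forall g, 0 <= f g) -> 0 <= m f.
Hypothesis hinv : forall (g : G) (f : G -> R), bounded_fun f ->
          m (fun h => f ((g^-1) * h)%g) = m f.
Variables (W : normedModType R) (rho : G -> W -> W).

Definition Pm (phi : G -> W -> R) : W -> R := fun w => m (fun h => phi h w).

Lemma linf_bnd (phi : G -> W -> R) (w : W) : in_linfty_dual phi -> bounded_fun (fun h => phi h w).
Proof. by move=> [_ [C hC]]; exists (C * `|w|). Qed.

Lemma P_dual (phi : G -> W -> R) : in_linfty_dual phi -> in_dual (Pm phi).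
Proof.
move=> hphi; have hb w := linf_bnd w hphi.
have hl : forall (a : R) (w w' : W), Pm phi (a *: w + w') = a * Pm phi w + Pm phi w'.
  move=> a w w'; rewrite /Pm -hlin //; congr m; apply/funext => h.
  by case: (hphi.1 h) => -> _.
split => //; case: (hphi) => _ [C hC].
apply: (lin_cont hl (C := C)) => w; apply: mbound => //.
Qed.

Lemma P_const (v : W -> R) : Pm (@const_fun G _ v) = v.
Proof. by apply/funext => w; rewrite /Pm /const_fun hc. Qed.

Lemma P_act g (phi : G -> W -> R) : in_linfty_dual phi ->
  Pm (linfty_act (dual_act rho) g phi) = dual_act rho g (Pm phi).
Proof.
move=> hphi; apply/funext => w; rewrite /Pm /linfty_act /dual_act.
by rewrite (hinv g (linf_bnd _ hphi)).
Qed.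

Lemma P_sgn j (phi : G -> W -> R) : in_linfty_dual phi -> Pm (sgn j phi) = sgn j (Pm phi).
Proof.
move=> hphi; apply/funext => w; rewrite /Pm /sgn; case: (odd j) => //=.
transitivity (- m (fun h => phi h w)); last by []. by rewrite -(mN hlin hc) //; exact: linf_bnd.
Qed.

Lemma sum_ev (I : Type) r (P : pred I) (F : I -> G -> W -> R) h w :
  (\sum_(i <- r | P i) F i) h w = \sum_(i <- r | P i) F i h w.
Proof. by rewrite fct_sumE fct_sumE. Qed.
Lemma sum_ev1 (I : Type) r (P : pred I) (F : I -> W -> R) w :
  (\sum_(i <- r | P i) F i) w = \sum_(i <- r | P i) F i w.
Proof. by rewrite fct_sumE. Qed.
Lemma sgn_ev (T : Type) (A : zmodType) j (F : T -> A) x : sgn j F x = sgn j (F x).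
Proof. by rewrite /sgn; case: (odd j). Qed.
Lemma sgn_bnd j (f : G -> R) : bounded_fun (fun h => sgn j (f h)) = bounded_fun f.
Proof.
rewrite /sgn; case: (odd j) => //; apply/propext; split => -[C hC]; exists C => g.
  by rewrite -normrN hC.
by rewrite normrN hC.
Qed.

Lemma P_cob k (b : seq G -> G -> W -> R) s :
  (forall t, size t = k -> in_linfty_dual (b t)) -> size s = k.+1 ->
  Pm (coboundary_map (linfty_act (dual_act rho)) b s) =
  coboundary_map (dual_act rho) (fun t => Pm (b t)) s.
Proof.
move=> hb; case: s => [|g t] // [ht].
have hm i : (i < size t)%N -> in_linfty_dual (b (merge_at i (g :: t))).
  by move=> hi; apply: hb; rewrite size_merge.
have htk : in_linfty_dual (b (take (size t) (g :: t))).
  by apply: hb; rewrite size_takel //= leqnSn.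
rewrite /coboundary_map; apply/funext => w; rewrite /Pm.
transitivity (m (fun h => b t (g^-1*h)%g (rho g^-1%g w)) +
  \sum_(i < size t) sgn i.+1 (m (fun h => b (merge_at i (g::t)) h w)) +
  sgn (size t).+1 (m (fun h => b (take (size t) (g::t)) h w))).
  under eq_fun do rewrite !addrfctE /= sum_ev !sgn_ev.
  have HF : forall i : 'I_(size t), bounded_fun (fun h => sgn i.+1 (b (merge_at i (g :: t))) h w).
    move=> i; under eq_fun do rewrite !sgn_ev; rewrite sgn_bnd; apply: linf_bnd; exact: hm.
  have [hSb hSm] := mean_sum hlin hc (index_enum 'I_(size t)) HF.
  have hX : bounded_fun (fun h => linfty_act (dual_act rho) g (b t) h w).
    by case: (hb t ht) => _ [C hC]; exists (C * `|rho g^-1%g w|) => h; exact: hC.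
  rewrite (mD hlin); last 2 first.
  - exact: bnd_D.
  - by rewrite sgn_bnd; apply: linf_bnd.
  rewrite (mD hlin) //.
  rewrite (msgn hlin hc); last by apply: linf_bnd.
  rewrite hSm.
  congr (_ + _ + _); apply: eq_bigr => i _ /=.
  under eq_fun do rewrite !sgn_ev; rewrite (msgn hlin hc) //.
  by apply: linf_bnd; apply: hm.
rewrite /= !addrfctE sum_ev1 sgn_ev /=; congr (_ + _ + _).
  by rewrite /dual_act (hinv g (linf_bnd _ _)) //; apply: hb.
by apply: eq_bigr => i _; rewrite sgn_ev.
Qed.
Lemma amen_inj k : dual_comparison_injective rho k.
Proof.
move=> f [hfc hfcyc].
case: k f hfc hfcyc => [|k] f hfc hfcyc /= hcob.
  by move=> s hs; have := hcob s hs; move/(congr1 (fun F => F 1%g)).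
case: hcob => b [hbc hbe]; exists (fun t => Pm (b t)); split.
  by move=> t ht; apply: P_dual; exact: hbc.
move=> s hs; rewrite -(P_cob hbc hs) -hbe //=.
by rewrite P_const.
Qed.
End AmenInj.


Section Osc.
Variables (R : realType) (G : groupType).
Definition osc (f : G -> R) : R := sup [set `|f x - f y| | x in setT & y in setT]%classic.

Lemma osc_ub (f : G -> R) x y : bounded_fun f -> `|f x - f y| <= osc f.
Proof.
move=> [C hC]; apply: ub_le_sup; last by exists x => //; exists y.
exists (C + C) => _ [a _ [b _ <-]].
by apply: (le_trans (ler_normB _ _)); apply: lerD.
Qed.

Lemma osc_le (f : G -> R) B : (forall x y, `|f x - f y| <= B) -> osc f <= B.
Proof.
move=> hB; apply: ge_sup.
  by exists `|f 1%g - f 1%g|; exists 1%g => //; exists 1%g.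
by move=> _ [a _ [b _ <-]].
Qed.
Lemma osc_ge0 (f : G -> R) : bounded_fun f -> 0 <= osc f.
Proof. by move=> hf; apply: le_trans (osc_ub 1%g 1%g hf); rewrite normr_ge0. Qed.
End Osc.

Section WDef.
Variables (R : realType) (G : groupType).
Record Wt := MkW { wf :> G -> R ; wP : bounded_fun wf /\ wf 1%g = 0 }.

Lemma W_eq (x y : Wt) : wf x = wf y -> x = y.
Proof. by case: x y => f p [g q] /= e; subst g; congr MkW; exact: Prop_irrelevance. Qed.

HB.instance Definition _ := gen_eqMixin Wt.
HB.instance Definition _ := gen_choiceMixin Wt.

Lemma W0P : bounded_fun (fun _ : G => 0 : R) /\ (fun _ : G => 0 : R) 1%g = 0.
Proof. by split => //; exact: bnd_cst. Qed.
Definition W0 := MkW W0P.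
Lemma WaddP (x y : Wt) : bounded_fun (fun g => x g + y g) /\ (fun g => x g + y g) 1%g = 0.
Proof. case: x y => f [hf f1] [g [hg g1]] /=; split; [exact: bnd_D | by rewrite f1 g1 addr0]. Qed.
Definition Wadd x y := MkW (WaddP x y).
Lemma WscaleP (a : R) (x : Wt) : bounded_fun (fun g => a * x g) /\ (fun g => a * x g) 1%g = 0.
Proof.
case: x => f [hf f1] /=; split; last by rewrite f1 mulr0.
by have := bnd_lin a hf (bnd_cst _ 0); under eq_fun do rewrite addr0.
Qed.
Definition Wscale a x := MkW (WscaleP a x).
Definition Wopp x := Wscale (-1) x.

Lemma WaddA : associative Wadd.
Proof. by move=> x y z; apply: W_eq; apply/funext => g /=; rewrite addrA. Qed.
Lemma WaddC : commutative Wadd.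
Proof. by move=> x y; apply: W_eq; apply/funext => g /=; rewrite addrC. Qed.
Lemma Wadd0 : left_id W0 Wadd.
Proof. by move=> x; apply: W_eq; apply/funext => g /=; rewrite add0r. Qed.
Lemma WaddN : left_inverse W0 Wopp Wadd.
Proof. by move=> x; apply: W_eq; apply/funext => g /=; rewrite mulN1r addNr. Qed.

HB.instance Definition _ := GRing.isZmodule.Build Wt WaddA WaddC Wadd0 WaddN.

Lemma WscaleA a b v : Wscale a (Wscale b v) = Wscale (a * b) v.
Proof. by apply: W_eq; apply/funext => g /=; rewrite mulrA. Qed.
Lemma Wscale1 : left_id 1 Wscale.
Proof. by move=> x; apply: W_eq; apply/funext => g /=; rewrite mul1r. Qed.
Lemma WscaleDr : right_distributive Wscale +%R.
Proof. by move=> a x y; apply: W_eq; apply/funext => g /=; rewrite mulrDr. Qed.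
Lemma WscaleDl v : {morph Wscale^~ v: a b / a + b}.
Proof. by move=> a b; apply: W_eq; apply/funext => g /=; rewrite mulrDl. Qed.

HB.instance Definition _ := GRing.Zmodule_isLmodule.Build R Wt WscaleA Wscale1 WscaleDr WscaleDl.

Lemma Wbnd (x : Wt) : bounded_fun x. Proof. by case: x => f []. Qed.
Lemma W1 (x : Wt) : x 1%g = 0. Proof. by case: x => f []. Qed.
Lemma WaddE (x y : Wt) g : (x + y) g = x g + y g. Proof. by []. Qed.
Lemma WscaleE a (x : Wt) g : (a *: x) g = a * x g. Proof. by []. Qed.

Definition Wnorm (x : Wt) := osc (wf x).

Lemma Wnorm_add x y : Wnorm (x + y) <= Wnorm x + Wnorm y.
Proof.
apply: osc_le => a b; rewrite !WaddE.
rewrite opprD addrACA; apply: (le_trans (ler_normD _ _)).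
by apply: lerD; apply: osc_ub; apply: Wbnd.
Qed.

Lemma Wnorm_ub (x : Wt) a b : `|x a - x b| <= Wnorm x.
Proof. exact/osc_ub/Wbnd. Qed.

Lemma Wnorm_ge0 (x : Wt) : 0 <= Wnorm x.
Proof. exact/osc_ge0/Wbnd. Qed.

Lemma Wnorm_scale (l : R) (x : Wt) : Wnorm (l *: x) = `|l| * Wnorm x.
Proof.
apply/eqP; rewrite eq_le; apply/andP; split.
  apply: osc_le => a b; rewrite !WscaleE -mulrBr normrM.
  by apply: ler_wpM2l => //; apply: Wnorm_ub.
have [->|l0] := eqVneq l 0; first by rewrite normr0 mul0r Wnorm_ge0.
have nl : 0 < `|l| by rewrite normr_gt0.
rewrite -ler_pdivlMl //; apply: osc_le => a b.
rewrite ler_pdivlMl // -normrM mulrBr -!WscaleE; exact: Wnorm_ub.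
Qed.

Lemma Wnorm_eq0 (x : Wt) : Wnorm x = 0 -> x = 0.
Proof.
move=> h; apply: W_eq; apply/funext => g /=.
have := Wnorm_ub x g 1%g; rewrite h W1 subr0 normr_le0 => /eqP ->.
by [].
Qed.

HB.instance Definition _ := Lmodule_isNormed.Build R Wt Wnorm_add Wnorm_scale Wnorm_eq0.
End WDef.

Section WAct.
Variables (R : realType) (G : groupType).
Local Notation W := (Wt R G).

Lemma WactP (g : G) (x : W) :
  bounded_fun (fun h => x (g^-1 * h)%g - x g^-1%g) /\
  (fun h => x (g^-1 * h)%g - x g^-1%g) 1%g = 0.
Proof.
split; last by rewrite /= mulg1 subrr.
apply: bnd_D; last exact: bnd_cst.
by case: (Wbnd x) => C hC; exists C.
Qed.
Definition Wact g x : W := MkW (WactP g x).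

Lemma WactE g (x : W) h : Wact g x h = x (g^-1 * h)%g - x g^-1%g.
Proof. by []. Qed.

Lemma Wact_iso : isometric_linear_action Wact.
Proof.
split.
- move=> g a w w'; apply: W_eq; apply/funext => h /=.
  rewrite /=; ring.
- move=> g w; apply/eqP; rewrite eq_le; apply/andP; split.
    apply: osc_le => a b; rewrite !WactE.
    have -> : w (g^-1 * a)%g - w g^-1%g - (w (g^-1 * b)%g - w g^-1%g) = w (g^-1 * a)%g - w (g^-1 * b)%g.
      by ring.
    exact: Wnorm_ub.
  apply: osc_le => a b.
  have -> : w a - w b = Wact g w (g * a)%g - Wact g w (g * b)%g.
    by rewrite !WactE !mulKg; ring.
  exact: Wnorm_ub.
- move=> w; apply: W_eq; apply/funext => h /=.
  by rewrite invg1 mul1g W1 subr0.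
- move=> g h w; apply: W_eq; apply/funext => x /=.
  rewrite invgM !mulgA; ring.
Qed.
End WAct.


Section Pos.
Variables (R : realType) (G : groupType) (mu : (G -> R) -> R).
Hypothesis Hlin : forall (a : R) (f f' : G -> R), bounded_fun f -> bounded_fun f' ->
          mu (fun g => a * f g + f' g) = a * mu f + mu f'.
Hypothesis Hc : forall c : R, mu (fun _ => c) = c.
Hypothesis Hinv : forall (g : G) (f : G -> R), bounded_fun f ->
          mu (fun h => f ((g^-1) * h)%g) = mu f.
Variable K : R.
Hypothesis Hb : forall f C, (forall x, `|f x| <= C) -> `|mu f| <= K * C.

Definition Adm (f g : G -> R) := bounded_fun g /\ forall x, 0 <= g x <= f x.
Definition S (f : G -> R) := sup [set mu g | g in Adm f]%classic.
Definition nnb (f : G -> R) := bounded_fun f /\ forall x, 0 <= f x.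

Lemma muZ a f : bounded_fun f -> mu (fun x => a * f x) = a * mu f.
Proof.
move=> hf; have := Hlin a hf (bnd_cst _ 0); rewrite Hc addr0 => <-.
by congr mu; apply/funext => x; rewrite addr0.
Qed.

Lemma S_ub f g : bounded_fun f -> Adm f g -> mu g <= S f.
Proof.
move=> [C hC] hg; apply: ub_le_sup; last by exists g.
exists (K * C) => _ [u [_ hu] <-].
apply: le_trans (ler_norm _) _; apply: Hb => x.
case/andP: (hu x) => h0 h1; rewrite ger0_norm //.
by apply: le_trans h1 (le_trans (ler_norm _) (hC x)).
Qed.

Lemma Adm0 f : (forall x, 0 <= f x) -> Adm f (fun _ => 0).
Proof. by move=> hf; split; [exact: bnd_cst | move=> x; rewrite lexx hf]. Qed.

Lemma S_le f B : (forall x, 0 <= f x) -> (forall g, Adm f g -> mu g <= B) -> S f <= B.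
Proof.
move=> hf hB; apply: ge_sup; first by exists (mu (fun _ => 0)), (fun _ => 0) => //; exact: Adm0.
by move=> _ [g hg <-]; exact: hB.
Qed.

Lemma S_ge0 f : nnb f -> 0 <= S f.
Proof. by case=> hf hf0; rewrite -(Hc 0); apply: S_ub => //; exact: Adm0. Qed.

Lemma nnbD f1 f2 : nnb f1 -> nnb f2 -> nnb (fun x => f1 x + f2 x).
Proof. by case=> h1 p1 [h2 p2]; split; [exact: bnd_D | move=> x; rewrite addr_ge0]. Qed.

Lemma S_add f1 f2 : nnb f1 -> nnb f2 -> S (fun x => f1 x + f2 x) = S f1 + S f2.
Proof.
move=> n1 n2; have n12 := nnbD n1 n2.
case: (n1) => b1 p1; case: (n2) => b2 p2; case: (n12) => b12 p12.
apply/eqP; rewrite eq_le; apply/andP; split.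
  apply: S_le => // g [hg hgf].
  pose g1 := fun x => if g x <= f1 x then g x else f1 x.
  pose g2 := fun x => g x - g1 x.
  have hg1 : Adm f1 g1.
    split.
      case: b1 => C hC; case: hg => D hD; exists (`|C| + `|D|) => x; rewrite /g1.
      case: ifP => _; apply: le_trans (_ : `|_| <= `|_|) _.
      - exact: lexx.
      - by apply: le_trans (hD x) _; rewrite ler_wpDl // (le_trans _ (ler_norm D)) ?normr_ge0.
      - exact: lexx.
      - by apply: le_trans (hC x) _; rewrite ler_wpDr // (le_trans _ (ler_norm C)) ?normr_ge0.
    move=> x; rewrite /g1; case: ifP => h; first by rewrite h andbT; case/andP: (hgf x).
    by rewrite lexx p1.
  have hg2 : Adm f2 g2.
    split; first by apply: bnd_D => //; apply: bnd_N; case: hg1.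
    move=> x; rewrite /g2 /g1; case: ifP => h.
      by rewrite subrr lexx p2.
    case/andP: (hgf x) => _ h2.
    rewrite subr_ge0 lerBlDr addrC h2 andbT.
    by move/negbT: h; rewrite -ltNge => /ltW.
  have -> : mu g = mu g1 + mu g2.
    rewrite -(mD Hlin) //; last by case: hg2.
      by congr mu; apply/funext => x; rewrite /g2 addrC subrK.
    by case: hg1.
  by apply: lerD; apply: S_ub.
rewrite -lerBrDr; apply: S_le => // g1 hg1.
rewrite lerBrDr addrC -lerBrDr; apply: S_le => // g2 hg2.
rewrite lerBrDr addrC -(mD Hlin); last 2 first.
- by case: hg1.
- by case: hg2.
apply: S_ub => //; split; first by apply: bnd_D; [case: hg1|case: hg2].
move=> x; case: hg1 => _ /(_ x) /andP[a1 a2]; case: hg2 => _ /(_ x) /andP[a3 a4].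
by rewrite addr_ge0 // lerD.
Qed.

Lemma nnbZ (a : R) (f : G -> R) : 0 <= a -> nnb f -> nnb (fun x => a * f x).
Proof.
move=> a0 [hf pf]; split; last by move=> x; rewrite mulr_ge0.
by have := bnd_lin a hf (bnd_cst _ 0); under eq_fun do rewrite addr0.
Qed.

Lemma bndZ (a : R) (f : G -> R) : bounded_fun f -> bounded_fun (fun x : G => a * f x).
Proof. by move=> hf; have := bnd_lin a hf (bnd_cst _ 0); under eq_fun do rewrite addr0. Qed.

Lemma S_scale (a : R) (f : G -> R) : 0 < a -> nnb f -> S (fun x => a * f x) = a * S f.
Proof.
move=> a0 nf; have naf := nnbZ (ltW a0) nf.
case: (nf) => bf pf; case: (naf) => baf paf.
apply/eqP; rewrite eq_le; apply/andP; split.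
  apply: S_le => // g [hg hgf].
  have -> : g = (fun x => a * (a^-1 * g x)).
    by apply/funext => x; rewrite mulrA mulfV ?gt_eqF // mul1r.
  rewrite muZ; last exact: bndZ.
  rewrite ler_pM2l //; apply: S_ub => //; split; first exact: bndZ.
  move=> x; case/andP: (hgf x) => h1 h2.
  by apply/andP; split; [rewrite mulr_ge0 // invr_ge0 ltW | rewrite ler_pdivrMl].
rewrite -ler_pdivlMl //; apply: S_le => // g [hg hgf].
rewrite ler_pdivlMl // -muZ //; apply: S_ub => //; split; first exact: bndZ.
move=> x; case/andP: (hgf x) => h1 h2.
by apply/andP; split; [rewrite mulr_ge0 // ltW | rewrite ler_pM2l].
Qed.

Lemma S_zero : S (fun _ => 0) = 0.
Proof.
apply/eqP; rewrite eq_le; apply/andP; split; last by apply: S_ge0; split; [exact: bnd_cst|].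
apply: S_le => // g [_ hg].
have -> : g = (fun _ => 0) by apply/funext => x; apply/eqP; rewrite eq_le andbC.
by rewrite Hc.
Qed.

Lemma S_const (d : R) : 0 <= d -> S (fun _ => d) = d * S (fun _ => 1).
Proof.
rewrite le_eqVlt => /orP[/eqP <-|d0]; first by rewrite S_zero mul0r.
rewrite -S_scale //; last by split; [exact: bnd_cst|].
by congr S; apply/funext => x; rewrite mulr1.
Qed.

Lemma S_inv_le (g : G) (f : G -> R) : nnb f -> S (fun h => f (g^-1 * h)%g) <= S f.
Proof.
move=> [bf pf]; apply: S_le => [x|u [hu hub]]; first exact: pf.
have -> : mu u = mu (fun h => u (g * h)%g).
  rewrite -[RHS](Hinv g); last by case: hu => C hC; exists C => x.
  by congr mu; apply/funext => x /=; rewrite mulVKg.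
apply: S_ub => //; split; first by case: hu => C hC; exists C => x.
by move=> x; have := hub (g * x)%g; rewrite mulKg.
Qed.

Lemma nnb_tr (g : G) (f : G -> R) : nnb f -> nnb (fun h => f (g^-1 * h)%g).
Proof. by case=> [[C hC] pf]; split; [exists C => x|]. Qed.

Lemma S_inv (g : G) (f : G -> R) : nnb f -> S (fun h => f (g^-1 * h)%g) = S f.
Proof.
move=> nf; apply/eqP; rewrite eq_le S_inv_le //=.
have := S_inv_le (g^-1)%g (nnb_tr g nf).
have -> : (fun h => f (g^-1 * (g^-1^-1 * h))%g) = f by apply/funext => h; rewrite invgK mulKg.
by [].
Qed.

Definition bof (f : G -> R) : R :=
  if pselect (bounded_fun f) is left hf then `|sval (cid hf)| else 0.
Lemma bofP f : bounded_fun f -> forall x, `|f x| <= bof f.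
Proof.
rewrite /bof; case: pselect => // hf _ x; case: (cid hf) => C hC /=.
exact: le_trans (hC x) (ler_norm C).
Qed.
Lemma bof_ge0 f : 0 <= bof f.
Proof. by rewrite /bof; case: pselect. Qed.
Lemma bof_adm f : bounded_fun f -> forall x, 0 <= f x + bof f.
Proof.
move=> hf x; have := bofP hf x; rewrite ler_norml => /andP[h _].
by rewrite -lerBlDr sub0r.
Qed.

Let S1 := S (fun _ => 1).
Lemma S1_gt0 : 0 < S1.
Proof.
apply: lt_le_trans ltr01 _; rewrite -[X in X <= _](Hc 1); apply: S_ub; first exact: bnd_cst.
by split; [exact: bnd_cst | move=> x; rewrite ler01 lexx].
Qed.

Definition J f := S (fun x => f x + bof f) - bof f * S1.

Lemma nnb_sh f c : bounded_fun f -> (forall x, 0 <= f x + c) -> nnb (fun x => f x + c).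
Proof. by move=> hf hc; split => //; apply: bnd_D => //; exact: bnd_cst. Qed.

Lemma S_shift f c d : bounded_fun f -> (forall x, 0 <= f x + c) -> 0 <= d ->
  S (fun x => f x + (c + d)) = S (fun x => f x + c) + d * S1.
Proof.
move=> hf hc hd; rewrite -S_const // -S_add //; first by congr S; apply/funext => x; rewrite addrA.
  exact: nnb_sh.
by split; [exact: bnd_cst|].
Qed.

Lemma J_any f c : bounded_fun f -> (forall x, 0 <= f x + c) ->
  J f = S (fun x => f x + c) - c * S1.
Proof.
move=> hf hc; rewrite /J; have hb := bof_adm hf.
have [le|le] := leP c (bof f).
  have hd : 0 <= bof f - c by rewrite subr_ge0.
  have := S_shift hf hc hd.
  have -> : c + (bof f - c) = bof f by ring.
  by move=> ->; ring.
have hd : 0 <= c - bof f by rewrite subr_ge0 ltW.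
have := S_shift hf hb hd.
have -> : bof f + (c - bof f) = c by ring.
by move=> ->; ring.
Qed.

Lemma J_plin (a : R) f f' : 0 <= a -> bounded_fun f -> bounded_fun f' ->
  J (fun x => a * f x + f' x) = a * J f + J f'.
Proof.
move=> a0 hf hf'; rewrite le_eqVlt in a0; case/orP: a0 => [/eqP <-|a0].
  rewrite mul0r add0r; congr J; apply/funext => x; by rewrite mul0r add0r.
have hb := bof_adm hf; have hb' := bof_adm hf'.
have hadm : forall x, 0 <= a * f x + f' x + (a * bof f + bof f').
  move=> x; have -> : a * f x + f' x + (a * bof f + bof f') = a * (f x + bof f) + (f' x + bof f') by ring.
  by apply: addr_ge0; [apply: mulr_ge0; [exact: ltW|exact: hb]|exact: hb'].
rewrite (J_any (bnd_lin a hf hf') hadm).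
have -> : (fun x => a * f x + f' x + (a * bof f + bof f')) =
          (fun x => a * (f x + bof f) + (f' x + bof f')).
  by apply/funext => x; ring.
rewrite S_add; first last.
- exact: nnb_sh.
- by apply: nnbZ; [exact: ltW | exact: nnb_sh].
rewrite S_scale //; last exact: nnb_sh.
rewrite /J; ring.
Qed.

Lemma J0 : J (fun _ => 0) = 0.
Proof.
rewrite (J_any (c := 0)); [|exact: bnd_cst|by move=> x /=; rewrite addr0].
by rewrite mul0r subr0 addr0 S_zero.
Qed.

Lemma J_N f : bounded_fun f -> J (fun x => - f x) = - J f.
Proof.
move=> hf; have := J_plin (ler01) hf (bnd_N hf).
have -> : (fun x => 1 * f x + - f x) = (fun _ => 0) by apply/funext => x; rewrite mul1r subrr.
by rewrite J0 mul1r => /eqP; rewrite eq_sym addrC addr_eq0 => /eqP.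
Qed.

Lemma J_lin (a : R) f f' : bounded_fun f -> bounded_fun f' ->
  J (fun x => a * f x + f' x) = a * J f + J f'.
Proof.
move=> hf hf'; have [a0|a0] := leP 0 a; first exact: J_plin.
have -> : (fun x => a * f x + f' x) = (fun x => (- a) * (- f x) + f' x).
  by apply/funext => x; rewrite mulrNN.
rewrite J_plin ?oppr_ge0 ?ltW //; last exact: bnd_N.
by rewrite J_N // mulrNN.
Qed.

Lemma J_const k : J (fun _ => k) = k * S1.
Proof.
have hk : 0 <= k + `|k| by have := ler_norm (- k); rewrite normrN; lra.
rewrite (J_any (c := `|k|)); [|exact: bnd_cst|by move=> x /=].
rewrite S_const //.
by rewrite /S1; ring.
Qed.

Lemma J_pos f : bounded_fun f -> (forall x, 0 <= f x) -> 0 <= J f.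
Proof.
move=> hf pf; rewrite (J_any (c := 0)) //; last by move=> x; rewrite addr0.
by rewrite mul0r subr0; apply: S_ge0; apply: nnb_sh => // x; rewrite addr0.
Qed.

Lemma J_inv (g : G) f : bounded_fun f -> J (fun h => f (g^-1 * h)%g) = J f.
Proof.
move=> hf; have hb := bof_adm hf.
have hb' : forall x, 0 <= f (g^-1 * x)%g + bof f by move=> x; exact: hb.
have hft : bounded_fun (fun h => f (g^-1*h)%g) by case: hf => C hC; exists C.
by rewrite (J_any hft hb') (S_inv g (nnb_sh hf hb)).
Qed.

Lemma amenable_of : amenable R G.
Proof.
exists (fun f => J f / S1); split.
- by move=> a f f' hf hf'; rewrite J_lin // mulrDl mulrA.
- by move=> c; rewrite J_const mulfK // gt_eqF // S1_gt0.
- by move=> f hf pf; rewrite divr_ge0 ?J_pos // ltW // S1_gt0.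
- by move=> g f hf; rewrite J_inv.
Qed.
End Pos.


Lemma normW (R : realType) (G : groupType) (w : Wt R G) : `|w| = Wnorm w. Proof. by []. Qed.

Section Back.
Variables (R : realType) (G : groupType).
Local Notation W := (Wt R G).
Hypothesis Hinj : dual_comparison_injective (@Wact R G) 1.



Lemma ev_bound (w : W) g : `|w g| <= 1 * `|w|.
Proof. by rewrite mul1r normW; have := Wnorm_ub w g 1%g; rewrite W1 subr0. Qed.

Lemma ev_dual g : in_dual (fun w : W => w g).
Proof.
have hl : forall (a : R) (w w' : W), (a *: w + w') g = a * w g + w' g by [].
by split => //; apply: (lin_cont hl (C := 1)) => w; apply: ev_bound.
Qed.

Definition ccl (s : seq G) : W -> R := fun w => w (head 1%g s).
Definition Bf : G -> W -> R := fun h w => - w h.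

Lemma ccl_cocycle : is_cocycle (dual_act (@Wact R G)) (@in_dual R W) 1 ccl.
Proof.
split; first by move=> [|g [|? ?]] // _; exact: ev_dual.
move=> [|g [|h [|? ?]]] // _; apply/funext => w.
rewrite /coboundary_map /= big_ord1 /= /sgn /= !addrfctE /= /dual_act /ccl /=.
rewrite invgK; change (w (g * h)%g - w g + - w (g * h)%g + w g = 0); ring.
Qed.

Lemma Bf_linf : in_linfty_dual Bf.
Proof.
split; last by exists 1 => h w; rewrite normrN; apply: ev_bound.
move=> h; have hl : forall (a : R) (w w' : W), Bf h (a *: w + w') = a * Bf h w + Bf h w'.
  by move=> a w w'; rewrite /Bf /=; ring.
by split => //; apply: (lin_cont hl (C := 1)) => w; rewrite normrN; apply: ev_bound.
Qed.

Lemma ccl_cob : is_coboundary (linfty_act (dual_act (@Wact R G))) (@in_linfty_dual R G W) 1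
   (@const_fun G (W -> R) \o ccl).
Proof.
exists (fun _ => Bf); split; first by move=> t _; exact: Bf_linf.
move=> [|g [|? ?]] // _; apply/funext => h; apply/funext => w.
rewrite /coboundary_map /= big_ord0 /sgn /=.
change (w g = - (Wact g^-1 w) (g^-1 * h)%g + 0 - - w h).
rewrite WactE invgK mulVKg; ring.
Qed.

Lemma exists_v : exists v : W -> R, in_dual v /\ forall g (w : W), w g = v (Wact g^-1%g w) - v w.
Proof.
case: (Hinj ccl_cocycle ccl_cob) => b [hb hbe]; exists (b [::]); split; first exact: hb.
move=> g w; have := congr1 (fun F => F w) (hbe [:: g] erefl).
rewrite /coboundary_map /= big_ord0 /sgn /=.
change (w g = b [::] (Wact g^-1 w) + 0 - b [::] w -> w g = b [::] (Wact g^-1 w) - b [::] w).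
by rewrite addr0.
Qed.
End Back.

Section Mu.
Variables (R : realType) (G : groupType).
Local Notation W := (Wt R G).
Variable v : W -> R.
Hypothesis hv : in_dual v.
Hypothesis hkey : forall g (w : W), w g = v (Wact g^-1%g w) - v w.

Lemma wofP (f : G -> R) (hf : bounded_fun f) :
  bounded_fun (fun x => f x - f 1%g) /\ (fun x => f x - f 1%g) 1%g = 0.
Proof. by split; [apply: bnd_D => //; exact: bnd_cst | rewrite /= subrr]. Qed.
Definition wof (f : G -> R) : W :=
  if pselect (bounded_fun f) is left hf then MkW (wofP hf) else 0.
Lemma wofE f : bounded_fun f -> forall x, wof f x = f x - f 1%g.
Proof. by rewrite /wof; case: pselect. Qed.

Definition mu (f : G -> R) := f 1%g - v (wof f).

Lemma vlin (a : R) (w w' : W) : v (a *: w + w') = a * v w + v w'.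
Proof. by case: hv => h _; apply: h. Qed.

Lemma mu_lin (a : R) (f f' : G -> R) : bounded_fun f -> bounded_fun f' ->
  mu (fun g => a * f g + f' g) = a * mu f + mu f'.
Proof.
move=> hf hf'; rewrite /mu.
have -> : wof (fun g => a * f g + f' g) = a *: wof f + wof f'.
  apply: W_eq; apply/funext => x; rewrite WaddE WscaleE !wofE //; last exact: bnd_lin.
  ring.
rewrite vlin; ring.
Qed.

Lemma mu_c c : mu (fun _ => c) = c.
Proof.
rewrite /mu.
have -> : wof (fun _ => c) = 0.
  by apply: W_eq; apply/funext => x; rewrite wofE ?subrr //; exact: bnd_cst.
by rewrite (v0 vlin) subr0.
Qed.

Lemma mu_inv (g : G) (f : G -> R) : bounded_fun f ->
  mu (fun h => f ((g^-1) * h)%g) = mu f.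
Proof.
move=> hf; have hft : bounded_fun (fun h => f ((g^-1) * h)%g) by case: hf => C hC; exists C.
rewrite /mu.
have -> : wof (fun h => f ((g^-1) * h)%g) = Wact g (wof f).
  apply: W_eq; apply/funext => x; rewrite WactE !wofE // mulg1; ring.
have := hkey g^-1%g (wof f); rewrite invgK wofE // => e.
have -> : v (Wact g (wof f)) = f g^-1%g - f 1%g + v (wof f) by rewrite e; ring.
rewrite mulg1; ring.
Qed.

Lemma mu_bnd : exists K, forall f C, (forall x, `|f x| <= C) -> `|mu f| <= K * C.
Proof.
case: (cont_bound vlin hv.2) => K hK; exists (1 + 2 * `|K|) => f C hC.
have hf : bounded_fun f by exists C.
have C0 : 0 <= C by apply: le_trans (hC 1%g); rewrite normr_ge0.
have hw : Wnorm (wof f) <= 2 * C.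
  apply: osc_le => a b; rewrite !wofE //.
  have -> : f a - f 1%g - (f b - f 1%g) = f a - f b by ring.
  by apply: le_trans (ler_normB _ _) _; rewrite mulr2n mulrDl mul1r lerD.
rewrite /mu; apply: le_trans (ler_normB _ _) _.
have h2 : `|v (wof f)| <= `|K| * (2 * C).
  apply: le_trans (hK _) _; rewrite normW.
  apply: le_trans (_ : `|K| * Wnorm (wof f) <= _); last by apply: ler_wpM2l.
  by apply: ler_wpM2r; [exact: Wnorm_ge0 | exact: ler_norm].
have := hC 1%g; lra.
Qed.
End Mu.

Lemma amen_all (R : realType) (G : groupType) : amenable R G ->
  forall (W : normedModType R) (rho : G -> W -> W),
      isometric_linear_action rho -> forall k : nat, dual_comparison_injective rho k.
Proof.
case=> m [h1 h2 h3 h4] W rho _ k; exact: (amen_inj h1 h2 h3 h4).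
Qed.

Lemma one_amen (R : realType) (G : groupType) :
  (forall (W : normedModType R) (rho : G -> W -> W),
      isometric_linear_action rho -> dual_comparison_injective rho 1) -> amenable R G.
Proof.
move=> H; have Hinj := H _ _ (@Wact_iso R G).
case: (exists_v Hinj) => v [hv hk].
case: (mu_bnd hv) => K hK.
apply: (@amenable_of R G (mu v) _ _ _ K hK).
- exact: mu_lin.
- exact: mu_c.
- exact: mu_inv.
Qed.

Unset Implicit Arguments.
Close Scope ring_scope.

Theorem mainTheorem1 (R : realType) (G : groupType) :
  (amenable R G <->
   (forall (W : normedModType R) (rho : G -> W -> W),
      isometric_linear_action rho -> dual_comparison_injective rho 1))
  /\
  ((forall (W : normedModType R) (rho : G -> W -> W),
      isometric_linear_action rho -> dual_comparison_injective rho 1) <->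
   (forall (W : normedModType R) (rho : G -> W -> W),
      isometric_linear_action rho ->
      forall k : nat, dual_comparison_injective rho k)).
Proof.
split; split.
- by move=> hA W rho hr; apply: amen_all.
- exact: one_amen.
- by move=> h1 W rho hr k; apply: amen_all => //; exact: one_amen.
- by move=> h W rho hr; apply: h.
Qed.
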